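(* Let $F$ be a finite field of characteristic $3$. Let $k\ge 0$ be an integer, $m=3k+1$, and $t$ an integer with $t^3\equiv 1\pmod m$ and $\gcd(m,t-1)=1$. Let $G=T_{3m}=\langle x,y\mid x^m=y^3=1,\ y^{-1}xy=x^t\rangle$ (of order $3m$) and let $FG$ be its group algebra over $F$. Let $s\in FG$ be the sum of all elements of $G$ whose order is a power of $3$ (including the identity). Then $$\{\alpha\in FG \mid \alpha s=s\alpha=0\}=\{a^-\hat{x}y^{-1}+a\hat{x}+a^+\hat{x}y \mid a^-,a,a^+\in F,\ a^-+a+a^+=0\}.$$
   Context: $\hat{x}=\sum_{i=0}^{m-1}x^i\in FG$, and for $g\in G$, $\hat{x}g=\sum_{i=0}^{m-1}x^ig$. *)

(* Defs.v *)
From HB Require Import structures.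
From mathcomp Require Import all_boot all_order all_algebra all_fingroup pgroup.
Set Implicit Arguments. Unset Strict Implicit. Unset Printing Implicit Defensive.
Import GRing.Theory.
Local Open Scope ring_scope.

(* The group algebra F[G] of a finite group G (a subgroup of gT) is modelled
   as functions gT -> F supported on G; addition and scaling are pointwise. *)
Section GroupAlgebra.
Variables (F : fieldType) (gT : finGroupType).

Definition in_galg (G : {set gT}) (alpha : {ffun gT -> F}) : Prop :=
  forall g, g \notin G -> alpha g = 0.

Definition gscale (c : F) (a : {ffun gT -> F}) : {ffun gT -> F} :=
  [ffun g => c * a g].

Definition gdelta (g0 : gT) : {ffun gT -> F} := [ffun g => (g == g0)%:R].

Definition gmul (G : {set gT}) (a b : {ffun gT -> F}) : {ffun gT -> F} :=
  [ffun g => \sum_(h in G) a h * b ((h^-1 * g)%g)].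

Definition psum (p : nat) (G : {set gT}) : {ffun gT -> F} :=
  \sum_(g in G | (p.-elt g)%g) gdelta g.

Definition ghat (x : gT) (m : nat) : {ffun gT -> F} :=
  \sum_(i < m) gdelta (x ^+ i)%g.
End GroupAlgebra.

(* Main.v *)
Require Import Defs.
From HB Require Import structures.
From mathcomp Require Import all_boot all_order all_algebra all_fingroup pgroup.
From mathcomp Require Import all_solvable ring zify.
Import GRing.Theory.
Local Open Scope ring_scope.

Section Aux.
Variables (F : finFieldType) (gT : finGroupType) (G X : {group gT}).
Hypothesis XG : X \subset G.

Lemma nat_ifE (b : bool) (c : F) : c * b%:R = if b then c else 0.
Proof. by case: b; rewrite ?mulr1 ?mulr0. Qed.

Lemma gmul_s_right (al s : {ffun gT -> F})
  (hs : forall w, s w = ((w \in G) && ((w == 1)%g || (w \notin X)))%:R)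
  g : g \in G ->
  gmul G al s g = al g + (\sum_(h in G) al h) - \sum_(w in X) al (g * w^-1)%g.
Proof.
move=> gG; rewrite ffunE.
have e1 : forall h, h \in G -> al h * s (h^-1 * g)%g =
   al h * (h == g)%:R + al h - al h * ((h^-1 * g)%g \in X)%:R.
  move=> h hG; rewrite hs groupMl ?groupV // gG /=.
  have -> : (h^-1 * g == 1)%g = (h == g).
    by rewrite -eq_invg_mul invgK.
  case: (boolP (h == g)) => [/eqP->|ng] /=.
    by rewrite mulVg group1 /=; rewrite mulr1; ring.
  case: ((h^-1 * g)%g \in X) => /=; ring.
rewrite (eq_bigr _ e1) sumrB big_split /=.
congr (_ + _ - _).
  rewrite (bigD1 g) //= eqxx mulr1 big1 ?addr0 // => h /andP[_ /negbTE ->].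
  by rewrite mulr0.
rewrite (reindex_inj (h := fun w => g * w^-1)%g); last first.
  by move=> a b /mulgI /invg_inj.
rewrite /=.
under eq_bigr do rewrite invMg invgK -mulgA mulVg mulg1.
rewrite big_mkcond /= [RHS]big_mkcond /=; apply: eq_bigr => w _.
rewrite groupMl // groupV nat_ifE.
case: (boolP (w \in X)) => wX; first by rewrite (subsetP XG).
by case: (w \in G).
Qed.

Lemma gmul_s_left (al s : {ffun gT -> F})
  (hs : forall w, s w = ((w \in G) && ((w == 1)%g || (w \notin X)))%:R)
  g : g \in G ->
  gmul G s al g = al g + (\sum_(h in G) al h) - \sum_(w in X) al (w^-1 * g)%g.
Proof.
move=> gG; rewrite ffunE.
have e1 : forall h, h \in G -> s h * al (h^-1 * g)%g =
   al (h^-1 * g)%g * (h == 1)%g%:R + al (h^-1 * g)%g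
       - al (h^-1 * g)%g * (h \in X)%:R.
  move=> h hG; rewrite hs hG /=.
  case: (boolP (h == 1)%g) => [/eqP->|ng] /=.
    by rewrite group1 /=; ring.
  case: (h \in X) => /=; ring.
rewrite (eq_bigr _ e1) sumrB big_split /=.
congr (_ + _ - _).
  rewrite (bigD1 1%g) //= eqxx mulr1 invg1 mul1g big1 ?addr0 // => h /andP[_ /negbTE ->].
  by rewrite mulr0.
  rewrite (reindex_inj (h := fun w => g * w^-1)%g); last first.
    by move=> a b /mulgI /invg_inj.
  rewrite /=.
  under eq_bigr do rewrite invMg invgK -mulgA mulVg mulg1.
  by apply: eq_bigl => w; rewrite groupMl // groupV.
rewrite big_mkcond /= [RHS]big_mkcond /=; apply: eq_bigr => w _.
rewrite nat_ifE.
case: (boolP (w \in X)) => wX; first by rewrite (subsetP XG).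
by case: (w \in G).
Qed.

Lemma gmul_delta (a : {ffun gT -> F}) z g :
  (forall h, h \notin G -> a h = 0) ->
  gmul G a (gdelta F z) g = a (g * z^-1)%g.
Proof.
move=> ha; rewrite ffunE.
have e1 : forall h, h \in G -> a h * gdelta F z (h^-1 * g)%g = a h * (h == g * z^-1)%g%:R.
  move=> h _; rewrite ffunE.
  suff -> : (h^-1 * g == z)%g = (h == g * z^-1)%g by [].
  apply/idP/idP => /eqP E; apply/eqP.
    by rewrite -E invMg invgK mulgA mulgV mul1g.
  by rewrite E invMg invgK -mulgA mulVg mulg1.
rewrite (eq_bigr _ e1).
case: (boolP ((g * z^-1)%g \in G)) => gG.
  rewrite (bigD1 (g * z^-1)%g) //= eqxx mulr1 big1 ?addr0 // => h /andP[_ /negbTE ->].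
  by rewrite mulr0.
rewrite ha // big1 // => h hG; case: eqP => [E|_]; last by rewrite mulr0.
by rewrite -E hG in gG.
Qed.

Lemma sum_pred1 (P : pred gT) w : \sum_(g | P g) (w == g)%:R = (P w)%:R :> F.
Proof.
case: (boolP (P w)) => Pw.
  rewrite (bigD1 w) //= eqxx big1 ?addr0 // => h /andP[_ nh].
  by rewrite eq_sym (negbTE nh).
by rewrite big1 // => h Ph; case: eqP => // E; by rewrite E Ph in Pw.
Qed.
Lemma addfE (f h : {ffun gT -> F}) g : (f + h) g = f g + h g.
Proof. by rewrite ffunE. Qed.
Lemma scaleE c (f : {ffun gT -> F}) g : gscale c f g = c * f g.
Proof. by rewrite ffunE. Qed.
Lemma zerofE g : (0 : {ffun gT -> F}) g = 0.
Proof. by rewrite ffunE. Qed.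
End Aux.

Theorem proposition3p2 (F : finFieldType) (hF : 3%N \in [pchar F])
    (gT : finGroupType) (G : {group gT}) (x y : gT) (k t : nat)
    (hx : (x ^+ (3 * k + 1) = 1)%g) (hy : (y ^+ 3 = 1)%g)
    (hrel : (x ^ y = x ^+ t)%g)
    (hG : G :=: <<[set x; y]>>%g) (hcard : #|G| = (3 * (3 * k + 1))%N)
    (ht3 : (t ^ 3 = 1 %[mod 3 * k + 1])%N)
    (htcop : coprime (3 * k + 1) (t - 1))
    (alpha : {ffun gT -> F}) (halpha : in_galg G alpha) :
  (gmul G alpha (psum F 3 G) = 0 /\ gmul G (psum F 3 G) alpha = 0) <->
  (exists am a ap : F, am + a + ap = 0 /\
     alpha = gscale am (gmul G (ghat F x (3 * k + 1)) (gdelta F (y^-1)%g))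
             + gscale a (ghat F x (3 * k + 1))
             + gscale ap (gmul G (ghat F x (3 * k + 1)) (gdelta F y))).
Proof.
set m := (3 * k + 1)%N in hx hcard ht3 htcop *.
have m_gt0 : (0 < m)%N by rewrite /m addn1.
have xG : x \in G by rewrite hG mem_gen // !inE eqxx.
have yG : y \in G by rewrite hG mem_gen // !inE eqxx orbT.
set X := <[x]>%G.
have XG : X \subset G by rewrite cycle_subG.
have yinv : (y^-1 = y * y)%g.
  by apply/eqP; rewrite eq_invg_mul -hy !expgS expg0 mulg1.
have conjX : forall u, u \in X -> (u ^ y = u ^+ t)%g.
  by move=> u /cycleP[i ->]; rewrite conjXg hrel -!expgM mulnC.
have XJ : forall u, u \in X -> (u ^ y)%g \in X.
  by move=> u uX; rewrite conjX // groupX.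
have XJV : forall u, u \in X -> (u ^ y^-1)%g \in X.
  by move=> u uX; rewrite yinv conjgM; apply: (XJ); apply: (XJ).
have nXy : y \in 'N(X)%g by rewrite inE -cycleJ hrel cycleX.
have GXY : G \subset (X * <[y]>)%g.
  rewrite -norm_joinEr ?cycle_subG // hG gen_subG; apply/subsetP => z.
  rewrite !inE => /orP[]/eqP->.
    by apply: (subsetP (joing_subl _ _)); apply: cycle_id.
  by apply: (subsetP (joing_subr _ _)); apply: cycle_id.
have ordy : (#[y]%g <= 3)%N by apply: dvdn_leq => //; rewrite order_dvdn hy.
have ordx : (#[x]%g %| m)%N by rewrite order_dvdn hx.
have cardX : #|X| = m.
  have h1 := subset_leq_card GXY.
  have h2 := mul_cardG X <[y]>%G.
  have h3 : (0 < #|X :&: <[y]>%G|)%N by apply: cardG_gt0.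
  have h4 : (#[x]%g <= m)%N by apply: dvdn_leq.
  rewrite -orderE in h2 *; rewrite -orderE in h2.
  rewrite hcard in h1.
  have h5 : (#|(X * <[y]>)%g| <= #[x]%g * #[y]%g)%N.
    by rewrite h2 leq_pmulr.
  have h6 : (#[x]%g * #[y]%g <= #[x]%g * 3)%N by rewrite leq_mul2l ordy orbT.
  lia.
have yX : y \notin X.
  apply/negP => yX.
  have := subset_leq_card GXY; rewrite mulGSid ?cycle_subG // cardX hcard.
  lia.
have decomp : forall g, g \in G ->
    [\/ g \in X, (g * y)%g \in X | (g * y^-1)%g \in X].
  move=> g /(subsetP GXY) /mulsgP[u v uX vY ->].
  case/cyclePmin: vY => j jlt ->.
  have j3 : (j < 3)%N by apply: leq_trans ordy.
  case: j j3 {jlt} => [|[|[|j]]] // _.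
  - by rewrite expg0 mulg1; apply: Or31.
  - by rewrite expg1 mulgK; apply: Or33.
  by rewrite -mulgA -expgSr hy mulg1; apply: Or32.
have dvd3 : (m %| 1 + t * t + t)%N.
  have [t0|tpos] := posnP t.
    by move: ht3; rewrite t0 exp0n // mod0n /dvdn => <-.
  move/eqP: ht3; rewrite eqn_mod_dvd; last by rewrite expn_gt0 tpos.
  have -> : (t ^ 3 - 1 = (t - 1) * (1 + t * t + t))%N.
    rewrite !expnS expn0 muln1. nia.
  by rewrite Gauss_dvdr.
have ordu : forall u n, u \in X -> (m %| n)%N -> (u ^+ n = 1)%g.
  move=> u n uX mn; apply/eqP; rewrite -order_dvdn.
  by apply: dvdn_trans mn; rewrite -cardX order_dvdG.
have cube : forall u, u \in X -> ((u * y) ^+ 3 = 1)%g.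
  move=> u uX.
  have E : ((u * y) ^+ 3 = u * (u ^ y^-1) * (u ^ y))%g.
    rewrite !conjgE invgK !expgS expg0 mulg1 !mulgA.
    have yy : (y^-1 * y^-1 = y)%g by rewrite {1}yinv mulgK.
    by rewrite -[(u * y * u * y^-1 * y^-1)%g]mulgA yy.
  rewrite E yinv conjgM !conjX ?groupX // -expgM -expgS -expgD.
  by apply: ordu => //; rewrite addnC.
have inv3 : forall g, g \in G -> g \notin X -> (g ^+ 3 = 1)%g.
  move=> g gG gX; case: (decomp g gG) => [gX'|gyX|gyX].
  - by rewrite gX' in gX.
  - have E : (g^-1 = ((g * y)^-1 ^ y^-1) * y)%g.
      by rewrite conjgE invgK invMg !mulgA mulgV mul1g mulgVK.
    have := cube _ (XJV _ (groupVr gyX)); rewrite -E expVgn => /eqP.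
    by rewrite invg_eq1 => /eqP.
  - by have := cube _ gyX; rewrite mulgKV.
have prime3 : prime 3 by [].
have elt3 : forall w, w \in G -> (3.-elt w)%g = (w == 1)%g || (w \notin X).
  move=> w wG; case: (eqVneq w 1%g) => [->|w1] /=; first by rewrite p_elt1.
  case: (boolP (w \in X)) => wX /=.
    apply/negP => hw.
    have h1 : ((3%N)^').-nat m by rewrite p'natE // /m dvdn_addr ?dvdn_mulr.
    have h2 : (#[w]%g %| m)%N by rewrite -cardX order_dvdG.
    have := pnat_1 hw (pnat_dvd h2 h1); move/eqP; rewrite order_eq1.
    by rewrite (negbTE w1).
  rewrite /p_elt; apply: pnat_dvd (pnat_id prime3).
  by rewrite order_dvdn inv3.
have hs : forall w, psum F 3 G w = ((w \in G) && ((w == 1)%g || (w \notin X)))%:R.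
  move=> w; rewrite /psum sum_ffunE.
  under eq_bigr do rewrite ffunE.
  rewrite sum_pred1.
  by case: (boolP (w \in G)) => wG //=; rewrite elt3.
have hm : (m%:R : F) = 1.
  by rewrite /m natrD natrM (pcharf0 hF) mul0r add0r.
have ordxm : #[x]%g = m by rewrite orderE.
have ghatE : forall g, ghat F x m g = (g \in X)%:R.
  move=> g; rewrite /ghat sum_ffunE.
  under eq_bigr do rewrite ffunE.
  case: (boolP (g \in X)) => gX.
    case/cyclePmin: gX => i; rewrite ordxm => ilt ->.
    rewrite (bigD1 (Ordinal ilt)) //= eqxx big1 ?addr0 // => j nj.
    rewrite (eq_expg_ord (Ordinal ilt) j) ?ordxm //.
    by rewrite eq_sym (negbTE nj).
  rewrite big1 // => i _; case: eqP => // E.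
  by rewrite E mem_cycle in gX.
have ghs : forall h, h \notin G -> ghat F x m h = 0.
  move=> h hhG; rewrite ghatE; case: (boolP (h \in X)) => // hX.
  by rewrite (subsetP XG _ hX) in hhG.
pose R am a ap : {ffun gT -> F} :=
  gscale am (gmul G (ghat F x m) (gdelta F (y^-1)%g))
  + gscale a (ghat F x m) + gscale ap (gmul G (ghat F x m) (gdelta F y)).
have RE : forall am a ap g, R am a ap g =
    am * ((g * y)%g \in X)%:R + a * (g \in X)%:R + ap * ((g * y^-1)%g \in X)%:R.
  move=> am a ap g; rewrite /R !addfE !scaleE !(gmul_delta _ _ _ _ _ _ ghs) invgK !ghatE.
  by [].
have notX : forall g, g \notin G -> g \notin X.
  by move=> g gG; apply/negP => gX; rewrite (subsetP XG _ gX) in gG.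
have Rsupp : forall am a ap g, g \notin G -> R am a ap g = 0.
  move=> am a ap g gG; rewrite RE !(negbTE (notX _ _)) ?mulr0 ?addr0 //.
  - by rewrite groupMr ?groupV.
  - by rewrite groupMr.
have cnt0 : \sum_(g in G) (g \in X)%:R = 1 :> F.
  have -> : \sum_(g in G) (g \in X)%:R = \sum_(g in X) 1 :> F.
    rewrite [RHS]big_mkcond [LHS]big_mkcond; apply: eq_bigr => w _.
    case: (boolP (w \in X)) => wX; first by rewrite (subsetP XG).
    by case: (w \in G).
  by rewrite sumr_const cardX hm.
have cnt : forall z, z \in G -> \sum_(g in G) ((g * z)%g \in X)%:R = 1 :> F.
  move=> z zG; rewrite (reindex_inj (h := fun w => w * z^-1)%g) /=; last first.
    by apply: mulIg.
  under eq_bigr do rewrite mulgVK.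
  rewrite -[RHS]cnt0; apply: eq_bigl => w.
  by rewrite groupMr ?groupV.
have sumR : forall am a ap, \sum_(g in G) R am a ap g = am + a + ap.
  move=> am a ap; under eq_bigr do rewrite RE.
  rewrite !big_split /= -!mulr_sumr cnt // cnt0 cnt ?groupV //.
  by rewrite !mulr1.
have yG' : (y^-1)%g \in G by rewrite groupV.
have yX' : (y^-1)%g \notin X by rewrite groupV.
have ex1 : forall g, g \in X -> (g * y)%g \in X -> False.
  by move=> g gX; rewrite groupMl // (negbTE yX).
have ex2 : forall g, g \in X -> (g * y^-1)%g \in X -> False.
  by move=> g gX; rewrite groupMl // (negbTE yX').
have ex3 : forall g, (g * y)%g \in X -> (g * y^-1)%g \in X -> False.
  move=> g h1 h2.
  have : ((g * y^-1)^-1 * (g * y))%g \in X by rewrite groupM ?groupV.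
  rewrite invMg invgK !mulgA mulgVK -yinv.
  by rewrite (negbTE yX').
have Rright : forall am a ap g w, w \in X -> R am a ap (g * w)%g = R am a ap g.
  move=> am a ap g w wX; rewrite !RE.
  have e1 : (g * w * y = g * y * (w ^ y))%g by rewrite conjgE !mulgA mulgK.
  have e2 : (g * w * y^-1 = g * y^-1 * (w ^ y^-1))%g.
    by rewrite conjgE invgK !mulgA mulgVK.
  by rewrite e1 e2 (groupMr _ (XJ w wX)) (groupMr _ (XJV w wX)) (groupMr _ wX).
have Rleft : forall am a ap g w, w \in X -> R am a ap (w * g)%g = R am a ap g.
  by move=> am a ap g w wX; rewrite !RE -!mulgA !(groupMl _ wX).
split.
  case=> h1 _.
  pose eps := \sum_(h in G) alpha h.
  pose A g := \sum_(w in X) alpha (g * w^-1)%g.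
  have H : forall g, g \in G -> alpha g + eps - A g = 0.
    by move=> g gG; rewrite -(gmul_s_right _ _ _ _ XG _ _ hs _ gG) h1 zerofE.
  have Ainv : forall g u, u \in X -> A (g * u)%g = A g.
    move=> g u uX; rewrite /A (reindex_inj (h := fun v => v * u)%g) /=; last first.
      by apply: mulIg.
    apply: eq_big => v; first by rewrite groupMr.
    by move=> _; rewrite invMg mulgA mulgK.
  have eps0 : eps = 0.
    have e : A 1%g = \sum_(w in X) (A 1%g - eps).
      rewrite {1}/A; apply: eq_bigr => w wX.
      have := H (1 * w^-1)%g; rewrite mul1g groupV (subsetP XG _ wX) => /(_ isT).
      rewrite -{2}[(w^-1)%g]mul1g Ainv ?groupV // => E.
      rewrite ?mul1g; apply/eqP; rewrite -subr_eq0; apply/eqP; rewrite -E; ring.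
    rewrite sumr_const cardX -mulr_natr hm mulr1 in e.
    have -> : eps = A 1%g - (A 1%g - eps) by ring.
    by rewrite -e subrr.
  have aA : forall g, g \in G -> alpha g = A g.
    move=> g gG; apply/eqP; rewrite -subr_eq0.
    by have := H g gG; rewrite eps0 addr0 => ->.
  have ainv : forall g u, g \in G -> u \in X -> alpha (g * u)%g = alpha g.
    move=> g u gG uX; rewrite (aA (g * u)%g) ?(aA g) ?Ainv //.
    by rewrite groupM // (subsetP XG).
  have Heq : alpha = R (alpha (y^-1)%g) (alpha 1%g) (alpha y).
    apply/ffunP => g; case: (boolP (g \in G)) => gG; last first.
      by rewrite Rsupp // halpha.
    rewrite RE; case: (decomp g gG) => [gX|gyX|gyX].
    - have -> : ((g * y)%g \in X) = false by apply/negP; apply: ex1.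
      have -> : ((g * y^-1)%g \in X) = false by apply/negP; apply: ex2.
      by rewrite gX -{1}[g]mul1g ainv // /= !(mulr0, mulr1, add0r, addr0).
    - have -> : (g \in X) = false by apply/negP => gX; apply: (ex1 g).
      have -> : ((g * y^-1)%g \in X) = false by apply/negP; apply: ex3.
      rewrite gyX.
      have E : (g = y^-1 * ((g * y) ^ y^-1))%g.
        by rewrite conjgE invgK !mulgA mulVg mul1g mulgK.
      by rewrite {1}E ainv ?XJV // /= !(mulr0, mulr1, add0r, addr0).
    - have -> : (g \in X) = false by apply/negP => gX; apply: (ex2 g).
      have -> : ((g * y)%g \in X) = false by apply/negP => ?; apply: (ex3 g).
      rewrite gyX.
      have E : (g = y * ((g * y^-1) ^ y))%g.
        by rewrite conjgE !mulgA mulgV mul1g mulgVK.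
      by rewrite {1}E ainv ?XJ // /= !(mulr0, mulr1, add0r, addr0).
  exists (alpha (y^-1)%g), (alpha 1%g), (alpha y); split; last exact: Heq.
  by rewrite -sumR -Heq -/eps eps0.
case=> am [a [ap [hsum ->]]].
rewrite -/(R am a ap).
have eps0 : \sum_(h in G) R am a ap h = 0 by rewrite sumR.
split; apply/ffunP => g; rewrite zerofE; case: (boolP (g \in G)) => gG.
- rewrite (gmul_s_right _ _ _ _ XG _ _ hs _ gG) eps0.
  under eq_bigr => w wX do rewrite (Rright _ _ _ _ _ (groupVr wX)).
  by rewrite sumr_const cardX -mulr_natr hm mulr1 addr0 subrr.
- rewrite ffunE big1 // => h hhG.
  by rewrite hs groupMl ?groupV // (negbTE gG) mulr0.
- rewrite (gmul_s_left _ _ _ _ XG _ _ hs _ gG) eps0.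
  under eq_bigr => w wX do rewrite (Rleft _ _ _ _ _ (groupVr wX)).
  by rewrite sumr_const cardX -mulr_natr hm mulr1 addr0 subrr.
- rewrite ffunE big1 // => h hhG.
  by rewrite Rsupp ?mulr0 // groupMl ?groupV.
Qed.
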